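(* Let $G=(V,E)$ be a finite graph, let $\lambda>0$, and let $(S_v : v\in V)$ be nonempty finite lists of colors. An $S$-coloring is a map $\sigma$ on $V$ with $\sigma(v)\in S_v$ for all $v$ and $\sigma(u)\neq\sigma(v)$ for all $uv\in E$; identify it with the set $\{(v,\sigma(v)):v\in V\}$. (1) If $|S_v|\ge(1+\lambda)d(v)$ for all $v\in V$, then there is a random $S$-coloring $\sigma$ of $G$ such that for every set $T=\{(u_1,\gamma_1),\dots,(u_k,\gamma_k)\}$ of vertex-color pairs with distinct $u_i$, $$\mathbb{P}(\sigma(u_1)=\gamma_1,\dots,\sigma(u_k)=\gamma_k)\le\prod_{i=1}^k\frac{1}{\lambda d(u_i)},$$ where a factor with $d(u_i)=0$ is interpreted as $+\infty$. (2) If $|S_v|\ge(1+\lambda)\Delta_G$ for all $v\in V$, then there is a random $S$-coloring $\sigma$ of $G$ which is $\frac{1}{\lambda\Delta_G}$-spread, i.e. for every set $T$ of vertex-color pairs, $\mathbb{P}(\sigma\supseteq T)\le(\lambda\Delta_G)^{-|T|}$.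
   Context: $d(v)$ is the degree of $v$ in $G$ and $\Delta_G$ the maximum degree of $G$. A random set $S$ is $p$-spread if $\mathbb{P}(S\supseteq T)\le p^{|T|}$ for all sets $T$. *)

(* Defs.v *)
From mathcomp Require Import all_boot all_order all_algebra.
From mathcomp Require Import reals.
Set Implicit Arguments. Unset Strict Implicit. Unset Printing Implicit Defensive.
Import Order.TTheory GRing.Theory Num.Theory.
Local Open Scope ring_scope.

Section Defs.
Variables (V C : finType).

Definition deg (e : rel V) (v : V) : nat := #|[set u | e v u]|.

Definition maxdeg (e : rel V) : nat := (\max_(v : V) deg e v)%N.

Definition is_S_coloring (e : rel V) (S : V -> {set C}) (s : {ffun V -> C}) : Prop :=
  (forall v, s v \in S v) /\ (forall u v, e u v -> s u != s v).

Definition coloring_set (s : {ffun V -> C}) : {set V * C} := [set (v, s v) | v : V].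

Variable R : realType.

Definition is_distr (p : {ffun V -> C} -> R) : Prop :=
  (forall s, 0 <= p s) /\ \sum_s p s = 1.

Definition random_S_coloring (e : rel V) (S : V -> {set C}) (p : {ffun V -> C} -> R) : Prop :=
  is_distr p /\ (forall s, p s != 0 -> is_S_coloring e S s).

Definition prob_contains (p : {ffun V -> C} -> R) (T : {set V * C}) : R :=
  \sum_(s | T \subset coloring_set s) p s.

Definition spread (p : {ffun V -> C} -> R) (q : R) : Prop :=
  forall T : {set V * C}, prob_contains p T <= q ^+ #|T|.

End Defs.

(* Main.v *)
Require Import Defs.
From mathcomp Require Import all_boot all_order all_algebra.
From mathcomp Require Import reals.
Import Order.TTheory GRing.Theory Num.Theory.
Set Implicit Arguments. Unset Strict Implicit. Unset Printing Implicit Defensive.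

Section Count.
Variables (V C : finType) (e : rel V) (S : V -> {set C}).
Hypothesis e_sym : symmetric e.
Hypothesis e_irr : irreflexive e.

Definition properb (s : {ffun V -> C}) : bool :=
  [forall v, s v \in S v] && [forall u, forall v, e u v ==> (s u != s v)].

Definition Col := [set s : {ffun V -> C} | properb s].
Definition AT (T : {set V * C}) := [set s in Col | T \subset coloring_set s].
Definition fupd (s : {ffun V -> C}) x c : {ffun V -> C} :=
  [ffun w => if w == x then c else s w].

Lemma sub_cs (T : {set V*C}) s :
  (T \subset coloring_set s) = [forall t in T, s t.1 == t.2].
Proof.
apply/subsetP/forall_inP => H t.
- by move/H; case/imsetP => w _ ->.
- by case: t => v c /H /= /eqP <-; apply/imsetP; exists v.
Qed.

Lemma properP s : reflect (is_S_coloring e S s) (properb s).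
Proof.
apply: (iffP andP) => [[/forallP H1 /forallP H2]|[H1 H2]]; split.
- exact H1.
- by move=> u v; apply/implyP/(forallP (H2 u)).
- by apply/forallP.
- by apply/forallP=> u; apply/forallP=> v; apply/implyP; apply H2.
Qed.

Lemma exists_col : (forall v, deg e v < #|S v|)%N -> (forall v, S v != set0) ->
  exists s, s \in Col.
Proof.
move=> Hd Sne.
have step : forall l : seq V, exists s : {ffun V -> C}, (forall v, s v \in S v) /\
    (forall u v, u \in l -> v \in l -> e u v -> s u != s v).
  elim=> [|x l [s [Hs Hl]]].
  - exists [ffun v => xchoose (elimT (set0Pn (S v)) (Sne v))]; split => // v.
    by rewrite ffunE; exact: xchooseP.
  have : ~~ (S x \subset [set s w | w in [set w | e x w]]).
    apply/negP => sub; have := subset_leq_card sub; rewrite leqNgt.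
    by rewrite (leq_ltn_trans (leq_imset_card _ _) (Hd x)).
  case/subsetPn => c cS cIm.
  exists (fupd s x c); split.
    by move=> v; rewrite ffunE; case: eqP => [->|].
  move=> u v uin vin euv; rewrite !ffunE.
  case: (eqVneq u x) => [ux|ux]; case: (eqVneq v x) => [vx|vx].
  - by subst; rewrite e_irr in euv.
  - subst u; apply: contra cIm => /eqP ->; apply/imsetP; exists v => //.
    by rewrite inE.
  - subst v; rewrite eq_sym; apply: contra cIm => /eqP ->; apply/imsetP; exists u => //.
    by rewrite inE e_sym.
  - apply: Hl => //.
    + by move: uin; rewrite in_cons (negbTE ux).
    + by move: vin; rewrite in_cons (negbTE vx).
have [s [Hs Hl]] := step (enum V); exists s; rewrite inE; apply/andP; split.
  by apply/forallP.
by apply/forallP=> u; apply/forallP=> v; apply/implyP; apply Hl; rewrite mem_enum.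
Qed.

Lemma step_card (T : {set V*C}) u g :
  (forall t, t \in T -> t.1 != u) ->
  (#|AT ((u,g) |: T)| * (#|S u| - deg e u) <= #|AT T|)%N.
Proof.
move=> HT.
set B := AT ((u,g) |: T).
pose f s' := fupd s' u g.
have Hsum : (\sum_(s in B) #|[set s' in AT T | f s' == s]| <= #|AT T|)%N.
  have -> : (\sum_(s in B) #|[set s' in AT T | f s' == s]| =
      \sum_(s in B) \sum_(s' | (s' \in AT T) && (f s' \in B) && (f s' == s)) 1)%N.
    apply: eq_bigr => s sB; rewrite -sum1_card; apply: eq_bigl => s'.
    by rewrite inE; case: (f s' =P s) => [->|]; rewrite ?sB ?andbT ?andbF.
  rewrite -(partition_big f (fun s => s \in B)) /=; last by move=> s /andP[].
  rewrite big_mkcondr /= -sum1_card; apply: leq_sum => s' _; by case: ifP.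
apply: leq_trans Hsum; rewrite -sum_nat_const; apply: leq_sum => s sB.
have := sB; rewrite inE => /andP[sCol]; rewrite sub_cs => /forall_inP sT.
have su : s u = g by apply/eqP; apply: (sT (u,g)); rewrite !inE eqxx.
have sT' : forall t, t \in T -> s t.1 == t.2 by move=> t tT; apply: sT; rewrite !inE tT orbT.
move: sCol; rewrite inE => /andP[/forallP sS /forallP sE].
set Im := [set s w | w in [set w | e u w]].
set Av := S u :\: Im.
have h1 : (#|S u| - deg e u <= #|Av|)%N.
  rewrite cardsD; apply: leq_sub2l; apply: leq_trans (leq_imset_card _ _).
  exact: subset_leq_card (subsetIr _ _).
apply: leq_trans h1 _.
have inj : injective (fupd s u).
  by move=> c1 c2 /ffunP/(_ u); rewrite !ffunE eqxx.
rewrite -(card_imset _ inj); apply: subset_leq_card; apply/subsetP => _ /imsetP[c cAv ->].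
move: cAv; rewrite in_setD; case/andP => cIm cS.
rewrite inE; apply/andP; split; last first.
  apply/eqP/ffunP => w; rewrite !ffunE; case: (w =P u) => [->|] //.
rewrite inE; apply/andP; split; last first.
  rewrite sub_cs; apply/forall_inP => t tT; rewrite ffunE (negbTE (HT t tT)).
  exact: sT'.
rewrite inE; apply/andP; split.
  by apply/forallP => v; rewrite ffunE; case: eqP => [->|].
apply/forallP => x; apply/forallP => v; apply/implyP => exv; rewrite !ffunE.
case: (eqVneq x u) => [xu|xu]; case: (eqVneq v u) => [vu|vu].
- by subst; rewrite e_irr in exv.
- subst x; apply: contra cIm => /eqP ->; apply/imsetP; exists v => //.
  by rewrite inE.
- subst v; rewrite eq_sym; apply: contra cIm => /eqP ->; apply/imsetP; exists x => //.
  by rewrite inE e_sym.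
- exact: (implyP (forallP (sE x) v)).
Qed.

Lemma main_card (T : {set V*C}) :
  (#|AT T| * \prod_(t in T) (#|S t.1| - deg e t.1) <= #|Col|)%N.
Proof.
have base : (#|AT set0| * \prod_(t in (set0 : {set V*C})) (#|S t.1| - deg e t.1) <= #|Col|)%N.
  rewrite big_pred0 ?muln1; last by move=> i; rewrite in_set0.
  apply: subset_leq_card; apply/subsetP => s.
  by rewrite inE => /andP[].
move: {2}#|T| (leqnn #|T|) => n; elim: n T => [|n IH] T hT.
  by move: hT; rewrite leqn0 cards_eq0 => /eqP ->.
case: (set_0Vmem T) => [->|[t tT]] //.
have hT' : (#|T :\ t| <= n)%N by move: hT; rewrite (cardsD1 t) tT.
rewrite (big_setD1 _ tT) /=.
case: (boolP [exists t' in T :\ t, t'.1 == t.1]) => [/exists_inP[t' t'T /eqP t't]|nex].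
  suff -> : AT T = set0 by rewrite cards0.
  apply/setP => s; rewrite !inE; apply/negbTE/negP => /andP[_].
  rewrite sub_cs => /forall_inP H.
  move: t'T; rewrite !inE => /andP[t'nt t'T].
  move/negP: t'nt; apply; apply/eqP.
  move: t't (H t tT) (H t' t'T); case: t {tT H hT hT' IH} => a b; case: t' {t'T} => a' b' /=.
  by move=> E /eqP E1 /eqP E2; subst; congruence.
have HT : forall t', t' \in T :\ t -> t'.1 != t.1.
  by move=> t' t'T; apply/negP => E; case/negP: nex; apply/exists_inP; exists t'.
have := @step_card (T :\ t) t.1 t.2 HT; rewrite -surjective_pairing setD1K //.
move=> H; rewrite mulnA; apply: leq_trans (IH _ hT').
by rewrite leq_mul2r H orbT.
Qed.
Local Open Scope ring_scope.
Variable R : realType.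

Definition pcol (s : {ffun V -> C}) : R := (s \in Col)%:R / #|Col|%:R.

Lemma prob_eq T : prob_contains pcol T = #|AT T|%:R / #|Col|%:R.
Proof.
rewrite /prob_contains /pcol -mulr_suml; congr (_ / _).
rewrite -natr_sum; congr (_%:R).
rewrite -sum1_card big_mkcond [RHS]big_mkcond; apply: eq_bigr => s _.
by rewrite [s \in AT T]inE andbC; case: (T \subset _); case: (s \in Col).
Qed.

Lemma pcol_rc : (exists s, s \in Col) -> random_S_coloring e S pcol.
Proof.
move=> [s0 s0C].
have N0 : (0 < #|Col|)%N by apply/card_gt0P; exists s0.
split; first split.
- by move=> s; rewrite /pcol divr_ge0.
- have := prob_eq set0; rewrite /prob_contains.
  rewrite (eq_bigl predT) => [->|s]; last by rewrite sub0set.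
  have -> : AT set0 = Col by apply/setP => s; rewrite [s \in AT _]inE sub0set andbT.
  by rewrite divff // pnatr_eq0 -lt0n.
- move=> s; rewrite /pcol; case: (boolP (s \in Col)) => [|_]; last by rewrite mul0r eqxx.
  by rewrite inE => /properP.
Qed.

Lemma real_bd (a N P : R) : 0 < N -> 0 < P -> a * P <= N -> a / N <= P^-1.
Proof.
by move=> N0 P0 H; rewrite ler_pdivrMr // ler_pdivlMl // mulrC.
Qed.

End Count.

Unset Implicit Arguments.
Local Open Scope ring_scope.

Theorem proposition4p1 (R : realType) (V C : finType) (e : rel V)
    (e_sym : symmetric e) (e_irr : irreflexive e)
    (lambda : R) (lambda_gt0 : 0 < lambda)
    (S : V -> {set C}) (S_ne : forall v, S v != set0) :
  ((forall v, (1 + lambda) * (deg e v)%:R <= (#|S v|)%:R) ->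
     exists p : {ffun V -> C} -> R, random_S_coloring e S p /\
       forall T : {set V * C},
         {in T &, forall t t', t.1 = t'.1 -> t = t'} ->
         (forall t, t \in T -> (0 < deg e t.1)%N) ->
         prob_contains p T <= \prod_(t in T) (lambda * (deg e t.1)%:R)^-1)
  /\
  ((forall v, (1 + lambda) * (maxdeg e)%:R <= (#|S v|)%:R) ->
     exists p : {ffun V -> C} -> R, random_S_coloring e S p /\
       ((0 < maxdeg e)%N -> spread p (lambda * (maxdeg e)%:R)^-1)).
Proof.
split => H.
- have Hd : forall v, (deg e v <= #|S v|)%N.
    move=> v; rewrite -(ler_nat R); apply: le_trans (H v).
    by rewrite mulrDl mul1r lerDl mulr_ge0 // ltW.
  have Hlt : forall v, (deg e v < #|S v|)%N.
    move=> v; case: (posnP (deg e v)) => [->|dp]; first by rewrite card_gt0.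
    rewrite -(ltr_nat R); apply: lt_le_trans (H v).
    by rewrite mulrDl mul1r ltrDl mulr_gt0 // ltr0n.
  have [s0 s0C] := exists_col e_sym e_irr Hlt S_ne.
  exists (pcol e S R); split; first by apply: pcol_rc; exists s0.
  move=> T _ Tpos; rewrite prob_eq prodfV.
  apply: real_bd.
  + by rewrite ltr0n; apply/card_gt0P; exists s0.
  + by apply: prodr_gt0 => t tT; rewrite mulr_gt0 // ltr0n; exact: Tpos.
  + apply: (@le_trans _ _ (#|AT e S T|%:R * (\prod_(t in T) ((#|S t.1| - deg e t.1)%N)%:R))).
      apply: ler_wpM2l => //; apply: ler_prod => t tT; apply/andP; split; first by rewrite mulr_ge0 ?ler0n // ltW.
      rewrite natrB // lerBrDr; move: (H t.1); rewrite mulrDl mul1r addrC.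
      by [].
    by rewrite -natr_prod -natrM ler_nat main_card.
- have Hdm : forall v, (deg e v <= maxdeg e)%N by move=> v; apply: leq_bigmax.
  have Hm : forall v, (maxdeg e <= #|S v|)%N.
    move=> v; rewrite -(ler_nat R); apply: le_trans (H v).
    by rewrite mulrDl mul1r lerDl mulr_ge0 // ltW.
  have Hd : forall v, (deg e v <= #|S v|)%N by move=> v; apply: leq_trans (Hm v).
  have Hlt : forall v, (deg e v < #|S v|)%N.
    move=> v; case: (posnP (maxdeg e)) => [D0|Dp].
      by move: (Hdm v); rewrite D0 leqn0 => /eqP ->; rewrite card_gt0.
    apply: leq_ltn_trans (Hdm v) _.
    rewrite -(ltr_nat R); apply: lt_le_trans (H v).
    by rewrite mulrDl mul1r ltrDl mulr_gt0 // ltr0n.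
  have [s0 s0C] := exists_col e_sym e_irr Hlt S_ne.
  exists (pcol e S R); split; first by apply: pcol_rc; exists s0.
  move=> Dp T; rewrite prob_eq exprVn.
  have -> : (lambda * (maxdeg e)%:R) ^+ #|T| = \prod_(t in T) (lambda * (maxdeg e)%:R).
    by rewrite prodr_const.
  apply: real_bd.
  + by rewrite ltr0n; apply/card_gt0P; exists s0.
  + by apply: prodr_gt0 => t tT; rewrite mulr_gt0 // ltr0n.
  + apply: (@le_trans _ _ (#|AT e S T|%:R * (\prod_(t in T) ((#|S t.1| - deg e t.1)%N)%:R))).
      apply: ler_wpM2l => //; apply: ler_prod => t tT; apply/andP; split; first by rewrite mulr_ge0 ?ler0n // ltW.
      rewrite natrB // lerBrDr; apply: le_trans (H t.1).
      by rewrite mulrDl mul1r addrC lerD2r ler_nat.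
    by rewrite -natr_prod -natrM ler_nat main_card.
Qed.
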